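(* Let $A_1,A_2$ be algebras and $k:A_1\to A_2$ an algebra epimorphism (surjective unital algebra homomorphism). Then $\dim(\mathfrak{u}_{A_2})\le\dim(\mathfrak{u}_{A_1})$.
   Context: An ''algebra'' is a real finite-dimensional unital associative algebra with underlying vector space $\mathbb{R}^n$, standard basis, elements column vectors $s=(x_1,\dots,x_n)^T$, $\mathbf{d}s=(dx_1,\dots,dx_n)^T$. An uncurling metric of $A$ is a real symmetric $n\times n$ matrix $L$ with $d\big((s^{-1})^TL\,\mathbf{d}s\big)=0$ on an open ball centered at $\mathbf{1}_A$ consisting only of units; the anti-rotor $\mathfrak{u}_A$ is the real vector space of all uncurling metrics of $A$. *)

(* Defs.v *)
From HB Require Import structures.
From mathcomp Require Import all_boot all_order all_algebra.
From mathcomp Require Import all_classical all_reals all_analysis.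
Set Implicit Arguments. Unset Strict Implicit. Unset Printing Implicit Defensive.
Import Order.TTheory GRing.Theory Num.Theory.
Import numFieldNormedType.Exports.
Local Open Scope classical_set_scope.
Local Open Scope ring_scope.

Record algebra (R : realType) := Algebra {
  adim : nat;
  amul : 'cV[R]_adim -> 'cV[R]_adim -> 'cV[R]_adim;
  aone : 'cV[R]_adim;
  amul_linl : forall (a : R) s t u, amul (a *: s + t) u = a *: amul s u + amul t u;
  amul_linr : forall (a : R) s t u, amul u (a *: s + t) = a *: amul u s + amul u t;
  amulA : forall s t u, amul s (amul t u) = amul (amul s t) u;
  amul1s : forall s, amul aone s = s;
  amuls1 : forall s, amul s aone = s }.

Arguments adim {R} a : rename.
Arguments amul {R} a _ _ : rename.
Arguments aone {R} a : rename.

Section Defs.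
Context {R : realType}.

Definition is_unit (A : algebra R) (s : 'cV[R]_(adim A)) : Prop :=
  exists t, amul A s t = aone A /\ amul A t s = aone A.

(* s^{-1} (the two-sided inverse; meaningful for units) *)
Definition ainv (A : algebra R) (s : 'cV[R]_(adim A)) : 'cV[R]_(adim A) :=
  xget 0 [set t | amul A s t = aone A /\ amul A t s = aone A].

Definition eball (n : nat) (c : 'cV[R]_n) (r : R) : set 'cV[R]_n :=
  [set s | \sum_i (s i 0 - c i 0) ^+ 2 < r ^+ 2].

Definition evec (n : nat) (k : 'I_n) : 'cV[R]_n := delta_mx k 0.

(* j-th coefficient of the 1-form (s^{-1})^T L ds = sum_j f_j(s) dx_j *)
Definition form_coef (A : algebra R) (L : 'M[R]_(adim A)) (j : 'I_(adim A))
  (s : 'cV[R]_(adim A)) : R :=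
  ((ainv s)^T *m L) 0 j.

(* d((s^{-1})^T L ds) = 0 at s: all partials exist and d_k f_j = d_j f_k *)
Definition closed_at (A : algebra R) (L : 'M[R]_(adim A)) (s : 'cV[R]_(adim A)) : Prop :=
  forall j k : 'I_(adim A),
    derivable (form_coef L j) s (evec k) /\
    'D_(evec k) (form_coef L j) s = 'D_(evec j) (form_coef L k) s.

Definition uncurling (A : algebra R) (L : 'M[R]_(adim A)) : Prop :=
  L^T = L /\
  exists r : R, 0 < r /\
    (forall s, eball (aone A) r s -> is_unit s) /\
    (forall s, eball (aone A) r s -> closed_at L s).

(* dim of the anti-rotor u_A (the real vector space of uncurling metrics):
   the maximal size of a linearly independent family of uncurling metrics. *)
Definition antirotor_dim (A : algebra R) : nat :=
  (\max_(d < (adim A ^ 2).+1 |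
     `[< exists S : seq 'M[R]_(adim A),
           size S = (d : nat) /\ free S /\ (forall L, L \in S -> uncurling L) >])
     (d : nat))%N.

Definition algebra_epi (A1 A2 : algebra R) (K : 'M[R]_(adim A2, adim A1)) : Prop :=
  K *m aone A1 = aone A2 /\
  (forall s t, K *m amul A1 s t = amul A2 (K *m s) (K *m t)) /\
  (forall y : 'cV[R]_(adim A2), exists x : 'cV[R]_(adim A1), K *m x = y).

End Defs.

Arguments algebra_epi {R} A1 A2 K.

(* Main.v *)
Require Import Defs.
From HB Require Import structures.
From mathcomp Require Import all_boot all_order all_algebra.
From mathcomp Require Import all_classical all_reals all_analysis.
From mathcomp Require Import ring lra.
Set Implicit Arguments. Unset Strict Implicit. Unset Printing Implicit Defensive.
Import Order.TTheory GRing.Theory Num.Theory.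
Import numFieldNormedType.Exports.
Local Open Scope classical_set_scope.
Local Open Scope ring_scope.

Lemma amul0l (R : realType) (A : algebra R) u : amul A 0 u = 0.
Proof.
have := @amul_linl _ A 1 0 0 u; rewrite !scale1r addr0.
by move=> /(congr1 (fun x => x - amul A 0 u)); rewrite subrr addrK => <-.
Qed.
Lemma amul0r (R : realType) (A : algebra R) u : amul A u 0 = 0.
Proof.
have := @amul_linr _ A 1 0 0 u; rewrite !scale1r addr0.
by move=> /(congr1 (fun x => x - amul A u 0)); rewrite subrr addrK => <-.
Qed.
Lemma amulDl (R : realType) (A : algebra R) s t u : amul A (s + t) u = amul A s u + amul A t u.
Proof. by have := @amul_linl _ A 1 s t u; rewrite !scale1r. Qed.
Lemma amulDr (R : realType) (A : algebra R) s t u : amul A u (s + t) = amul A u s + amul A u t.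
Proof. by have := @amul_linr _ A 1 s t u; rewrite !scale1r. Qed.
Lemma amulZl (R : realType) (A : algebra R) (a : R) s u : amul A (a *: s) u = a *: amul A s u.
Proof. by have := @amul_linl _ A a s 0 u; rewrite !addr0 amul0l addr0. Qed.
Lemma amulZr (R : realType) (A : algebra R) (a : R) s u : amul A u (a *: s) = a *: amul A u s.
Proof. by have := @amul_linr _ A a s 0 u; rewrite !addr0 amul0r addr0. Qed.
Lemma amulNl (R : realType) (A : algebra R) s u : amul A (- s) u = - amul A s u.
Proof. by rewrite -scaleN1r amulZl scaleN1r. Qed.
Lemma amulNr (R : realType) (A : algebra R) s u : amul A u (- s) = - amul A u s.
Proof. by rewrite -scaleN1r amulZr scaleN1r. Qed.
Lemma amulBl (R : realType) (A : algebra R) s t u : amul A (s - t) u = amul A s u - amul A t u.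
Proof. by rewrite amulDl amulNl. Qed.
Lemma amulBr (R : realType) (A : algebra R) s t u : amul A u (s - t) = amul A u s - amul A u t.
Proof. by rewrite amulDr amulNr. Qed.
Lemma amul_suml (R : realType) (A : algebra R) m (F : 'I_m -> _) u :
  amul A (\sum_(i < m) F i) u = \sum_(i < m) amul A (F i) u.
Proof.
elim: m F => [|m IH] F; first by rewrite !big_ord0 amul0l.
by rewrite !big_ord_recr /= amulDl IH.
Qed.
Lemma amul_sumr (R : realType) (A : algebra R) m (F : 'I_m -> _) u :
  amul A u (\sum_(i < m) F i) = \sum_(i < m) amul A u (F i).
Proof.
elim: m F => [|m IH] F; first by rewrite !big_ord0 amul0r.
by rewrite !big_ord_recr /= amulDr IH.
Qed.

Lemma ainvP (R : realType) (A : algebra R) s : is_unit s ->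
  amul A s (ainv s) = aone A /\ amul A (ainv s) s = aone A.
Proof. by move=> h; apply: (xgetPex 0 h). Qed.

Lemma inv_uniq (R : realType) (A : algebra R) s t t' :
  amul A s t = aone A -> amul A t' s = aone A -> t = t'.
Proof.
move=> h1 h2; rewrite -[t]amul1s -h2 -amulA h1 amuls1 //.
Qed.

Lemma ainv_eq (R : realType) (A : algebra R) s t :
  amul A s t = aone A -> amul A t s = aone A -> ainv s = t.
Proof.
move=> h1 h2; have [_ h] : amul A s (ainv s) = aone A /\ amul A (ainv s) s = aone A.
  by apply: ainvP; exists t.
by apply/esym/(inv_uniq h1 h).
Qed.

Lemma cV_decomp (R : realType) n (s : 'cV[R]_n) : s = \sum_(i < n) s i 0 *: evec i.
Proof.
apply/matrixP => i j; rewrite ord1 summxE (bigD1 i) //= big1 ?addr0.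
  by rewrite !mxE eqxx /= mulr1.
by move=> k /negPf ki; rewrite !mxE eq_sym ki mulr0.
Qed.

Lemma linmx (R : realType) n m (f : 'cV[R]_n -> 'cV[R]_m) :
  (forall (a : R) s t, f (a *: s + t) = a *: f s + f t) ->
  forall s, f s = (\matrix_(i, k) f (evec k) i 0) *m s.
Proof.
move=> lf.
have f0 : f 0 = 0.
  by have := lf 1 0 0; rewrite !scale1r addr0 => /(congr1 (fun x => x - f 0)); rewrite subrr addrK => <-.
have fZ a s : f (a *: s) = a *: f s by have := lf a s 0; rewrite addr0 f0 addr0.
have fD s t : f (s + t) = f s + f t by have := lf 1 s t; rewrite !scale1r.
have fsum k (F : 'I_k -> _) : f (\sum_(i < k) F i) = \sum_(i < k) f (F i).
  elim: k F => [|k IH] F; first by rewrite !big_ord0.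
  by rewrite !big_ord_recr /= fD IH.
move=> s; rewrite {1}(cV_decomp s) fsum.
apply/matrixP => i j; rewrite ord1 summxE !mxE; apply: eq_bigr => k _.
by rewrite fZ !mxE mulrC.
Qed.

Definition nrm (R : realType) n (s : 'cV[R]_n) : R := \sum_i `|s i 0|.

Lemma nrm_ge0 (R : realType) n (s : 'cV[R]_n) : 0 <= nrm s.
Proof. by apply: sumr_ge0 => i _. Qed.

Lemma entry_le (R : realType) n (s : 'cV[R]_n) i : `|s i 0| <= nrm s.
Proof.
rewrite /nrm (bigD1 i) //= lerDl; by apply: sumr_ge0.
Qed.

Lemma nrmD (R : realType) n (s t : 'cV[R]_n) : nrm (s + t) <= nrm s + nrm t.
Proof.
rewrite /nrm -big_split /=; apply: ler_sum => i _; rewrite mxE; exact: ler_normD.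
Qed.

Lemma nrmZ (R : realType) n (a : R) (s : 'cV[R]_n) : nrm (a *: s) = `|a| * nrm s.
Proof.
rewrite /nrm mulr_sumr; apply: eq_bigr => i _; by rewrite mxE normrM.
Qed.

Lemma nrmN (R : realType) n (s : 'cV[R]_n) : nrm (- s) = nrm s.
Proof. by rewrite -scaleN1r nrmZ normrN normr1 mul1r. Qed.

Lemma nrm0 (R : realType) n : nrm (0 : 'cV[R]_n) = 0.
Proof. by rewrite -(scale0r (0 : 'cV[R]_n)) nrmZ normr0 mul0r. Qed.

Lemma nrm_eq0 (R : realType) n (s : 'cV[R]_n) : nrm s = 0 -> s = 0.
Proof.
move=> /eqP; rewrite psumr_eq0 => [/allP h|i _]; last by [].
apply/matrixP => i j; rewrite ord1 mxE.
by have /(_ (mem_index_enum i)) := h i; rewrite implyTb normr_eq0 => /eqP.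
Qed.

Lemma nrm_sum (R : realType) n m (F : 'I_m -> 'cV[R]_n) :
  nrm (\sum_(i < m) F i) <= \sum_(i < m) nrm (F i).
Proof.
elim: m F => [|m IH] F; first by rewrite !big_ord0 nrm0.
rewrite !big_ord_recr /=; apply: le_trans (nrmD _ _) _; by rewrite lerD2r.
Qed.

Definition acst (R : realType) (A : algebra R) : R :=
  \sum_i \sum_j nrm (amul A (evec i) (evec j)).

Lemma acst_ge0 (R : realType) (A : algebra R) : 0 <= acst A.
Proof. by apply: sumr_ge0 => i _; apply: sumr_ge0 => j _; apply: nrm_ge0. Qed.

Lemma amul_bound (R : realType) (A : algebra R) u t :
  nrm (amul A u t) <= acst A * nrm u * nrm t.
Proof.
rewrite {1}(cV_decomp u) amul_suml.
apply: le_trans (nrm_sum _) _.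
rewrite /acst -mulrA mulr_suml; apply: ler_sum => i _.
rewrite amulZl nrmZ {1}(cV_decomp t) amul_sumr.
apply: le_trans (ler_wpM2l (normr_ge0 _) (nrm_sum _)) _.
rewrite mulr_suml mulr_sumr; apply: ler_sum => j _.
rewrite amulZr nrmZ.
have h1 := entry_le u i; have h2 := entry_le t j.
have h3 := nrm_ge0 (amul A (evec i) (evec j)).
have h4 := normr_ge0 (u i 0); have h5 := normr_ge0 (t j 0).
rewrite (mulrA `|u i 0|) (mulrC (nrm (amul A (evec i) (evec j)))); exact: (ler_wpM2r h3 (ler_pM h4 h5 h1 h2)).
Qed.

Definition mcst (R : realType) m n (K : 'M[R]_(m, n)) : R := \sum_i \sum_j `|K i j|.

Lemma mcst_ge0 (R : realType) m n (K : 'M[R]_(m, n)) : 0 <= mcst K.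
Proof. by apply: sumr_ge0 => i _; apply: sumr_ge0 => j _. Qed.

Lemma mat_bound (R : realType) m n (K : 'M[R]_(m, n)) s :
  nrm (K *m s) <= mcst K * nrm s.
Proof.
rewrite /nrm /mcst mulr_suml; apply: ler_sum => i _; rewrite mxE.
apply: le_trans (ler_norm_sum _ _ _) _; rewrite mulr_suml; apply: ler_sum => j _.
rewrite normrM; apply: ler_wpM2l => //; exact: (entry_le s j).
Qed.

Lemma sum_sq_le (R : realType) m (F : 'I_m -> R) : (forall i, 0 <= F i) ->
  \sum_i F i ^+ 2 <= (\sum_i F i) ^+ 2.
Proof.
elim: m F => [|m IH] F hF; first by rewrite !big_ord0 expr0n.
rewrite !big_ord_recr /=.
have := IH (fun i => F (widen_ord (leqnSn m) i)) (fun i => hF _).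
have : 0 <= \sum_(i < m) F (widen_ord (leqnSn m) i) by apply: sumr_ge0.
have := hF ord_max.
set a := \sum_(i < m) _; set b := F _; set c := \sum_(i < m) _.
move=> hb ha hc; nra.
Qed.

Lemma nrm_eball (R : realType) n (c s : 'cV[R]_n) r : nrm (s - c) < r -> eball c r s.
Proof.
move=> h; rewrite /eball /=.
have h0 := nrm_ge0 (s - c).
apply: le_lt_trans (_ : nrm (s - c) ^+ 2 < r ^+ 2); last first.
  by rewrite ltr_pXn2r // ?nnegrE //; apply: le_trans h0 (ltW h).
rewrite /nrm.
have := @sum_sq_le R n (fun i => `|(s - c) i 0|) (fun i => normr_ge0 _).
apply: le_trans; apply: ler_sum => i _; by rewrite -real_normK ?num_real // !mxE.
Qed.

Lemma eball_nrm (R : realType) n (c s : 'cV[R]_n) r : 0 < r -> eball c r s ->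
  nrm (s - c) <= n%:R * r.
Proof.
move=> r0 h; rewrite /nrm.
have -> : n%:R * r = \sum_(i < n) r by rewrite sumr_const card_ord mulr_natl.
apply: ler_sum => i _; apply: ltW.
have : (s i 0 - c i 0) ^+ 2 < r ^+ 2.
  apply: le_lt_trans h; rewrite (bigD1 i) //= lerDl.
  by apply: sumr_ge0 => j _; apply: sqr_ge0.
rewrite !mxE -real_normK ?num_real // ltr_pXn2r // ?nnegrE //; exact: ltW.
Qed.

Lemma sq_bound (R : realType) n (x w : 'cV[R]_n) :
  \sum_i (x i 0 + w i 0) ^+ 2 <= \sum_i x i 0 ^+ 2 + (2 * nrm x * nrm w + nrm w ^+ 2).
Proof.
have e : \sum_i (x i 0 + w i 0) ^+ 2 =
   \sum_i x i 0 ^+ 2 + (\sum_i (2 * x i 0 * w i 0) + \sum_i w i 0 ^+ 2).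
  rewrite -!big_split /=; apply: eq_bigr => i _; rewrite sqrrD; ring.
rewrite e lerD2l; apply: lerD.
  rewrite [X in _ <= _ * X]/nrm mulr_sumr; apply: ler_sum => i _.
  have := entry_le x i; have := normr_ge0 (w i 0); have := normr_ge0 (x i 0).
  have := nrm_ge0 x; have := ler_norm (x i 0 * w i 0); rewrite normrM.
  nra.
have := @sum_sq_le R n (fun i => `|w i 0|) (fun i => normr_ge0 _).
apply: le_trans; apply: ler_sum => i _; by rewrite -real_normK ?num_real.
Qed.

Lemma eball_open (R : realType) n (c s : 'cV[R]_n) r : eball c r s ->
  exists2 d, 0 < d & forall w, nrm w < d -> eball c r (s + w).
Proof.
rewrite /eball /= => h.
set q := \sum_i _ in h.
set a := nrm (s - c).
have a0 : 0 <= a by apply: nrm_ge0.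
have p : 0 < (r ^+ 2 - q) / (2 * a + 2).
  by apply: divr_gt0; [rewrite subr_gt0 | lra].
exists (Num.min 1 ((r ^+ 2 - q) / (2 * a + 2))); first by rewrite lt_min ltr01 p.
move=> w; rewrite lt_min => /andP[w1 w2].
have := sq_bound (s - c) w.
have -> : \sum_i ((s - c) i 0 + w i 0) ^+ 2 = \sum_i ((s + w) i 0 - c i 0) ^+ 2.
  by apply: eq_bigr => i _; rewrite !mxE; congr (_ ^+ 2); ring.
have -> : \sum_i (s - c) i 0 ^+ 2 = q by apply: eq_bigr => i _; rewrite !mxE.
move=> hle; apply: le_lt_trans hle _.
have w0 := nrm_ge0 w.
have : nrm w * (2 * a + 2) < r ^+ 2 - q by rewrite -ltr_pdivlMr //; lra.
fold a; nra.
Qed.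

Lemma near1_unit (R : realType) (A : algebra R) s :
  acst A * nrm (s - aone A) < 1 -> is_unit s.
Proof.
move=> hs.
have inj t : amul A s t = 0 -> t = 0.
  have -> : s = aone A + (s - aone A) by rewrite addrC subrK.
  rewrite amulDl amul1s => /eqP; rewrite addr_eq0 => /eqP ht.
  have := amul_bound (s - aone A) t; rewrite -nrmN -ht => hb.
  have := nrm_ge0 t; have := nrm_ge0 (s - aone A); have := acst_ge0 A.
  move=> h1 h2 h3; apply: nrm_eq0; nra.
set M := \matrix_(i, k) amul A s (evec k) i 0.
have hM t : amul A s t = M *m t by apply: linmx => a u v; apply: amul_linr.
have Mu : M \in unitmx.
  rewrite unitmxE unitfE -det_tr; apply/negP => /det0P [v v0 hv].
  have : amul A s v^T = 0 by rewrite hM -(trmxK M) -trmx_mul hv trmx0.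
  move/inj => /(congr1 trmx); rewrite trmxK trmx0 => v00.
  by move: v0; rewrite v00 eqxx.
exists (invmx M *m aone A); split.
  by rewrite hM mulmxA mulmxV // mul1mx.
have e : M *m amul A (invmx M *m aone A) s = M *m aone A.
  by rewrite -!hM amulA hM mulmxA mulmxV // mul1mx amul1s amuls1.
by have := congr1 (mulmx (invmx M)) e; rewrite !mulKmx.
Qed.

Lemma arith1 (R : realType) (m c r x : R) : 0 <= m -> 0 <= c -> 0 < r ->
  r * ((m + 1) * (c + 1)) = 1 -> 0 <= x -> x <= m * r -> c * x < 1.
Proof.
move=> m0 c0 r0 hr x0 h.
have h1 : c * x <= c * (m * r) by apply: ler_wpM2l.
have h2 : 0 < r * (m + c + 1) by apply: mulr_gt0 => //; lra.
have e : c * (m * r) = r * ((m + 1) * (c + 1)) - r * (m + c + 1) by ring.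
rewrite hr in e.
lra.
Qed.

Lemma unit_ball (R : realType) (A : algebra R) :
  exists2 r, 0 < r & forall s, eball (aone A) r s -> is_unit s.
Proof.
have c0 := acst_ge0 A.
have n0 : 0 <= (adim A)%:R :> R by [].
exists (((adim A)%:R + 1) * (acst A + 1))^-1.
  by rewrite invr_gt0; apply: mulr_gt0; lra.
move=> s hs; apply: near1_unit.
have := eball_nrm _ hs; set r := _^-1.
have r0 : 0 < r by rewrite invr_gt0; apply: mulr_gt0; lra.
move=> /(_ r0) h.
have hr : r * (((adim A)%:R + 1) * (acst A + 1)) = 1 by rewrite mulVf //; apply/lt0r_neq0/mulr_gt0; lra.
exact: (arith1 n0 c0 r0 hr (nrm_ge0 _) h).
Qed.

Lemma lin_cvg (R : realType) (g : R -> R) (D Kc d : R) : 0 < d ->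
  (forall h, h != 0 -> `|h| < d -> `|g h - D| <= Kc * `|h|) ->
  g @ 0^' --> D.
Proof.
move=> d0 hg; apply/cvgrPdist_lt => e e0.
have m0 : 0 < Num.min d (e / (`|Kc| + 1)).
  by rewrite lt_min d0 /=; apply: divr_gt0 => //; apply: ltr_pwDr.
near=> h.
have hne : h != 0 by near: h; exact: nbhs_dnbhs_neq.
have hlt : `|h| < Num.min d (e / (`|Kc| + 1)) by near: h; apply: dnbhs0_lt.
move: hlt; rewrite lt_min => /andP[h1 h2].
rewrite distrC; apply: le_lt_trans (hg h hne h1) _.
have k1 : 0 < `|Kc| + 1 by apply: ltr_pwDr.
rewrite ltr_pdivlMr // in h2.
have := ler_norm Kc; have := normr_ge0 h; nra.
Unshelve. all: by end_near.
Qed.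

Lemma dot_bound (R : realType) n (x w : 'cV[R]_n) : `|(x^T *m w) 0 0| <= nrm x * nrm w.
Proof.
rewrite mxE; apply: le_trans (ler_norm_sum _ _ _) _.
rewrite /nrm mulr_suml; apply: ler_sum => i _; rewrite mxE normrM.
by apply: ler_wpM2l => //; apply: entry_le.
Qed.

Lemma dotB (R : realType) n (a b w : 'cV[R]_n) :
  ((a - b)^T *m w) 0 0 = (a^T *m w) 0 0 - (b^T *m w) 0 0.
Proof. by rewrite linearB /= mulmxBl !mxE. Qed.

Lemma dotZ (R : realType) n (k : R) (a w : 'cV[R]_n) :
  ((k *: a)^T *m w) 0 0 = k * (a^T *m w) 0 0.
Proof. by rewrite linearZ /= -scalemxAl !mxE. Qed.

Lemma deriv_ainv (R : realType) (A : algebra R) (y v w : 'cV[R]_(adim A)) d :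
  is_unit y -> 0 < d -> (forall h : R, `|h| < d -> is_unit (h *: v + y)) ->
  derivable (fun x => ((ainv x)^T *m w) 0 0) y v /\
  'D_v (fun x => ((ainv x)^T *m w) 0 0) y =
     - ((amul A (amul A (ainv y) v) (ainv y))^T *m w) 0 0.
Proof.
move=> hy d0 hd.
set f := fun x => _.
set yi := ainv y; set P := amul A yi v; set b := acst A * nrm P.
set D := - _.
have [yy1 yy2] := ainvP hy.
have b0 : 0 <= b by apply: mulr_ge0; [apply: acst_ge0 | apply: nrm_ge0].
suff H : (fun h => h^-1 *: ((f \o shift y) (h *: v) - f y)) @ 0^' --> D.
  by split; [exact: cvgP H | exact: (cvg_lim (@Rhausdorff R) H)].
have dd0 : 0 < Num.min d (2 * (b + 1))^-1.
  by rewrite lt_min d0 /= invr_gt0; lra.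
apply: (@lin_cvg _ _ D (b * b * 2 * nrm yi * nrm w) _ dd0) => h hne.
rewrite lt_min => /andP[h1 h2].
have hu := hd h h1.
have [zz1 zz2] := ainvP hu.
move: zz1 zz2; set z := ainv _ => zz1 zz2.
have ez : z = yi - h *: amul A P z.
  have : amul A yi (amul A (h *: v + y) z) = yi by rewrite zz1 amuls1.
  rewrite amulA amulDr amulZr yy2 amulDl amulZl amul1s => <-.
  by rewrite addrC addKr.
have eg : h^-1 *: ((f \o shift y) (h *: v) - f y) = - ((amul A P z)^T *m w) 0 0.
  have fz : (z^T *m w) 0 0 = (yi^T *m w) 0 0 - h * ((amul A P z)^T *m w) 0 0.
    by rewrite {1}ez dotB dotZ.
  rewrite /= /f -/z -/yi fz addrAC subrr add0r.
  rewrite -[_ *: _]/(_ * _) mulrN mulrA mulVf // mul1r //.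
rewrite eg.
have e2 : - ((amul A P z)^T *m w) 0 0 - D = - ((amul A P (z - yi))^T *m w) 0 0.
  by rewrite /D amulBr dotB opprB opprK addrC.
rewrite e2 normrN.
apply: le_trans (dot_bound _ _) _.
have nz : nrm z <= 2 * nrm yi.
  have h3 : nrm z <= nrm yi + `|h| * (b * nrm z).
    rewrite {1}ez; apply: le_trans (nrmD _ _) _; rewrite nrmN nrmZ lerD2l.
    apply: ler_wpM2l => //; exact: amul_bound.
  have ha := normr_ge0 h; have hz := nrm_ge0 z.
  have h4 : `|h| * (2 * (b + 1)) < 1 by rewrite -ltr_pdivlMr //; lra.
  nra.
have hY : nrm (z - yi) <= `|h| * (b * (2 * nrm yi)).
  have -> : z - yi = - (h *: amul A P z) by rewrite {1}ez addrAC subrr add0r.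
  rewrite nrmN nrmZ; apply: ler_wpM2l => //.
  apply: le_trans (amul_bound _ _) _; rewrite -/b; exact: ler_wpM2l.
have hX : nrm (amul A P (z - yi)) <= b * (`|h| * (b * (2 * nrm yi))).
  apply: le_trans (amul_bound _ _) _; rewrite -/b; exact: ler_wpM2l.
apply: le_trans (ler_wpM2r (nrm_ge0 w) hX) _.
rewrite le_eqVlt; apply/orP; left; apply/eqP; ring.
Qed.

Lemma form_coefE (R : realType) (A : algebra R) (L : 'M[R]_(adim A)) j :
  form_coef L j = fun x => ((ainv x)^T *m (L *m evec j)) 0 0.
Proof.
by apply: funext => x; rewrite /form_coef mulmxA /evec -colE [RHS]mxE.
Qed.

Lemma line_units (R : realType) (A : algebra R) c r (s v : 'cV[R]_(adim A)) :
  (forall x, eball c r x -> is_unit x) -> eball c r s ->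
  exists2 d, 0 < d & forall h : R, `|h| < d -> is_unit (h *: v + s).
Proof.
move=> hU hs; have [d d0 hd] := eball_open hs.
have n0 := nrm_ge0 v.
exists (d / (nrm v + 1)); first by apply: divr_gt0; lra.
move=> h hh; apply: hU; rewrite addrC; apply: hd; rewrite nrmZ.
rewrite ltr_pdivlMr in hh; last by lra.
have := normr_ge0 h; nra.
Qed.

Definition Bf (R : realType) (A : algebra R) (L : 'M[R]_(adim A)) y (a b : 'cV[R]_(adim A)) :=
  ((amul A (amul A (ainv y) a) (ainv y))^T *m (L *m b)) 0 0.

Lemma sym_B (R : realType) (A : algebra R) (L : 'M[R]_(adim A)) y :
  is_unit y ->
  (forall v, exists2 d, 0 < d & forall h : R, `|h| < d -> is_unit (h *: v + y)) ->
  closed_at L y -> forall a b, Bf L y a b = Bf L y b a.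
Proof.
move=> hy hl hc.
set Mt := \matrix_(i, k) (amul A (amul A (ainv y) (evec k)) (ainv y)) i 0.
have hMt a : amul A (amul A (ainv y) a) (ainv y) = Mt *m a.
  pose F := fun a => amul A (amul A (ainv y) a) (ainv y).
  have lin : forall (c : R) u t, F (c *: u + t) = c *: F u + F t.
    by move=> c u t; rewrite /F amul_linr amul_linl.
  exact: (linmx lin a).
set Q := Mt^T *m L.
have BQ a b : Bf L y a b = (a^T *m Q *m b) 0 0.
  by rewrite /Bf hMt trmx_mul !mulmxA.
have Qkj k j : Bf L y (evec k) (evec j) = Q k j.
  rewrite BQ /evec trmx_delta -rowE -colE !mxE //.
have Qs : Q^T = Q.
  apply/matrixP => k j; rewrite mxE -!Qkj.
  have [_ e] := hc j k.
  have [d1 d10 hd1] := hl (evec k); have [d2 d20 hd2] := hl (evec j).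
  have [_ D1] := deriv_ainv (L *m evec j) hy d10 hd1.
  have [_ D2] := deriv_ainv (L *m evec k) hy d20 hd2.
  move: e; rewrite !form_coefE D1 D2 => /eqP; rewrite eqr_opp => /eqP.
  by rewrite /Bf.
move=> a b; rewrite !BQ.
transitivity ((a^T *m Q *m b)^T 0 0); first by rewrite [RHS]mxE.
by rewrite trmx_mul (trmx_mul (a^T) Q) trmxK Qs mulmxA.
Qed.

Lemma K_ainv (R : realType) (A1 A2 : algebra R) (K : 'M[R]_(adim A2, adim A1)) s :
  algebra_epi A1 A2 K -> is_unit s -> is_unit (K *m s) /\ ainv (K *m s) = K *m ainv s.
Proof.
move=> [K1 [KM _]] hs; have [h1 h2] := ainvP hs.
have e1 : amul A2 (K *m s) (K *m ainv s) = aone A2 by rewrite -KM h1.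
have e2 : amul A2 (K *m ainv s) (K *m s) = aone A2 by rewrite -KM h2.
split; first by exists (K *m ainv s).
exact: ainv_eq.
Qed.

Lemma eball_mono (R : realType) n (c s : 'cV[R]_n) r1 r0 :
  0 <= r1 -> r1 <= r0 -> eball c r1 s -> eball c r0 s.
Proof.
rewrite /eball /= => h0 h1 h; apply: lt_le_trans h _.
by rewrite ler_pXn2r // ?nnegrE //; apply: le_trans h1.
Qed.

Lemma arith2 (R : realType) (c m r r1 x : R) : 0 <= c -> 0 <= m -> 0 < r -> 0 < r1 ->
  r1 <= r / (c * m + 1) -> 0 <= x -> x <= m * r1 -> c * x < r.
Proof.
move=> c0 m0 r0 r10 h x0 hx.
have p : 0 < c * m + 1 by have := mulr_ge0 c0 m0; lra.
rewrite ler_pdivlMr // in h.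
have h1 : c * x <= c * (m * r1) by apply: ler_wpM2l.
have : c * (m * r1) = r1 * (c * m + 1) - r1 by ring.
lra.
Qed.

Lemma pullback (R : realType) (A1 A2 : algebra R) (K : 'M[R]_(adim A2, adim A1)) L :
  algebra_epi A1 A2 K -> uncurling L -> uncurling (K^T *m L *m K).
Proof.
move=> hK [Ls [r [r0 [hU hC]]]].
have [K1 [KM _]] := hK.
split; first by rewrite !trmx_mul trmxK Ls mulmxA.
have [r1 r10 hU1] := unit_ball A1.
set c := mcst K; set m := (adim A1)%:R : R.
have c0 : 0 <= c by apply: mcst_ge0.
have m0 : 0 <= m by [].
set r2 := Num.min r1 (r / (c * m + 1)).
have r20 : 0 < r2.
  rewrite lt_min r10 /=; apply: divr_gt0 => //; have := mulr_ge0 c0 m0; lra.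
exists r2; split => //.
have hU2 : forall s, eball (aone A1) r2 s -> is_unit s.
  move=> s hs; apply: hU1; apply: eball_mono hs; [exact: ltW | by rewrite ge_min lexx].
split => // s hs.
have hy : eball (aone A2) r (K *m s).
  apply: nrm_eball; rewrite -K1 -mulmxBr.
  apply: le_lt_trans (mat_bound _ _) _; rewrite -/c.
  apply: (arith2 c0 m0 r0 r20 (_ : r2 <= _) (nrm_ge0 _)).
    by rewrite ge_min lexx orbT.
  exact: eball_nrm.
have us := hU2 _ hs.
have [uy ey] := K_ainv hK us.
move=> j k.
have [d d0 hd] := line_units (evec k) hU2 hs.
have [Dv DD] := deriv_ainv (K^T *m L *m K *m evec j) us d0 hd.
have [d' d0' hd'] := line_units (evec j) hU2 hs.
have [Dv' DD'] := deriv_ainv (K^T *m L *m K *m evec k) us d0' hd'.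
rewrite !form_coefE; split => //.
rewrite DD DD'; congr (- _).
have conv a b : ((amul A1 (amul A1 (ainv s) a) (ainv s))^T *m (K^T *m L *m K *m b)) 0 0
   = Bf L (K *m s) (K *m a) (K *m b).
  rewrite /Bf ey -!KM -!mulmxA trmx_mul.
  by rewrite !mulmxA.
rewrite !conv; apply: sym_B => //.
  by move=> v; apply: line_units hU hy.
exact: hC.
Qed.

Lemma right_inv (R : realType) m n (K : 'M[R]_(m, n)) :
  (forall y : 'cV[R]_m, exists x, K *m x = y) -> exists J : 'M[R]_(n, m), K *m J = 1%:M.
Proof.
move=> hs; have [f hf] := boolp.choice (fun j : 'I_m => hs (evec j)).
exists (\matrix_(i, j) f j i 0); apply/matrixP => i j.
have := congr1 (fun M : 'cV[R]_m => M i 0) (hf j); rewrite !mxE /= eqxx andbT => <-.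
by apply: eq_bigr => l _; rewrite !mxE.
Qed.

Lemma free_size (R : realType) n (S : seq 'M[R]_n) : free S -> (size S <= n * n)%N.
Proof.
rewrite /free => /eqP <-.
apply: leq_trans (dimvS (subvf _)) _; rewrite dimvf dim_matrix; exact: leqnn.
Qed.

Lemma free_map_inj (R : realType) m n (K : 'M[R]_(m, n)) (S : seq 'M[R]_m) :
  (exists J : 'M[R]_(n, m), K *m J = 1%:M) ->
  free S -> free (map (fun L => K^T *m L *m K) S).
Proof.
move=> [J KJ] hfS; have hf := elimT freeP (hfS : free (in_tuple S)).
set g := fun L : 'M[R]_m => K^T *m L *m K.
change (free (map_tuple g (in_tuple S))); apply/freeP => k hk i.
apply: hf => //.
have ginj M : g M = 0 -> M = 0.
  move=> /(congr1 (fun X => J^T *m X *m J)); rewrite /g mulmx0 mul0mx.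
  by rewrite !mulmxA -trmx_mul KJ trmx1 mul1mx -mulmxA KJ mulmx1.
apply: ginj.
have -> : g (\sum_(i < size S) k i *: (in_tuple S)`_i) =
          \sum_(i < size S) k i *: (map_tuple g (in_tuple S))`_i.
  rewrite /g mulmx_sumr mulmx_suml; apply: eq_bigr => l _.
  by rewrite /= (nth_map 0 0) // -scalemxAr -scalemxAl.
exact: hk.
Qed.

Theorem corollary6p2 (R : realType) (A1 A2 : algebra R)
  (K : 'M[R]_(adim A2, adim A1)) :
  algebra_epi A1 A2 K -> (antirotor_dim A2 <= antirotor_dim A1)%N.
Proof.
move=> hK; have [_ [_ hsurj]] := hK.
have hJ := right_inv hsurj.
rewrite /antirotor_dim; apply/bigmax_leqP => d /asboolP [S [hsz [hfree hunc]]].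
set S1 := map (fun L => K^T *m L *m K) S.
have f1 : free S1 by apply: free_map_inj.
have hd : (d < (adim A1 ^ 2).+1)%N.
  by rewrite ltnS -hsz -(size_map (fun L => K^T *m L *m K)) expnS expn1 free_size.
apply: (@leq_bigmax_cond _ _ (fun d : 'I_(adim A1 ^ 2).+1 => (d : nat)) (Ordinal hd)).
apply/asboolP; exists S1; split; first by rewrite size_map.
split => // L /mapP [L2 hL2 ->].
apply: pullback => //; exact: hunc.
Qed.
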